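(* Let $\mathcal M_1,\mathcal M_2,\dots$ be LMCs $\mathcal M_i=(S,L,\tau_i,\ell)$ sharing the state set, label set and labelling. Suppose that for each $s\in S$ there is a finite set $N(s)\subseteq S$ with $\mathrm{support}(\tau_i(s))\subseteq N(s)$ for all $i$. Let $S_0\subseteq S$ be finite with $\liminf_{i\to\infty}\max\{d_{\mathcal M_i}(s,t):s,t\in S_0\}=0$, and put $N=\bigcup_{s\in S_0}N(s)$. Then there exist a function $\tau:S_0\to\mathrm{Distr}(S)$, a partition $\{S_1,\dots,S_k\}$ of $N$, and a distribution $\mu$ on $\{1,\dots,k\}$ such that $\tau(s)(S_j)=\mu(j)$ for all $s\in S_0$ and $1\le j\le k$, and \[\liminf_{i\to\infty}\max\Big(\{|\tau_i(s)-\tau(s)|:s\in S_0\}\cup\{|\tau_i(s)(S_j)-\mu(j)|:s\in S_0,1\le j\le k\}\cup\{d_{\mathcal M_i}(u,v):1\le j\le k,\ u,v\in S_j\}\Big)=0.\]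
   Context: An LMC $(S,L,\tau,\ell)$ has a nonempty countable state set $S$, finite label set $L$, finitely-branching transition function $\tau:S\to\mathrm{Distr}(S)$ and labelling $\ell:S\to L$. Its probabilistic bisimilarity distance $d$ is the least fixed point of $\Delta(e)(s,t)=1$ if $\ell(s)\ne\ell(t)$, and $\Delta(e)(s,t)=\min_{\omega}\sum_{u,v}\omega(u,v)e(u,v)$ otherwise, the minimum over couplings $\omega\in\mathrm{Distr}(S\times S)$ with marginals $\tau(s)$ and $\tau(t)$. For finitely supported real vectors, $|\cdot|$ denotes the $L_1$ norm, so $|\tau_i(s)-\tau(s)|=\sum_{x\in S}|\tau_i(s)(x)-\tau(s)(x)|$; $\tau(s)(E)=\sum_{x\in E}\tau(s)(x)$. *)

(* Defs.v *)
From mathcomp Require Import all_boot all_order all_algebra.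
From mathcomp Require Import all_classical all_reals.
From mathcomp Require Import ereal sequences.
Set Implicit Arguments. Unset Strict Implicit. Unset Printing Implicit Defensive.
Import Order.TTheory GRing.Theory Num.Theory.
Local Open Scope classical_set_scope.
Local Open Scope ring_scope.

Section LMC.
Context {R : realType}.

Definition is_distr (T : choiceType) (f : T -> R) : Prop :=
  (forall x, 0 <= f x) /\ finite_set [set x | f x != 0] /\
  \sum_(x \in [set: T]) f x = 1.

Definition prob_of (T : choiceType) (f : T -> R) (E : set T) : R :=
  \sum_(x \in E) f x.

Definition l1dist (T : choiceType) (f g : T -> R) : R :=
  \sum_(x \in [set: T]) `|f x - g x|.

Context {S : countType} {L : finType}.

Definition is_coupling (mu nu : S -> R) (w : S * S -> R) : Prop :=
  is_distr w /\
  (forall u, \sum_(v \in [set: S]) w (u, v) = mu u) /\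
  (forall v, \sum_(u \in [set: S]) w (u, v) = nu v).

(* The operator Delta (the minimum over couplings, written as inf; it is attained) *)
Definition Delta (lab : S -> L) (tau : S -> S -> R) (e : S -> S -> R)
    (s t : S) : R :=
  if lab s != lab t then 1
  else inf [set c | exists w, is_coupling (tau s) (tau t) w /\
                       c = \sum_(p \in [set: S * S]) w p * e p.1 p.2].

Definition unit_valued (e : S -> S -> R) : Prop :=
  forall s t, 0 <= e s t <= 1.

(* d is the least fixed point of Delta on [0,1]^(S x S):
   the probabilistic bisimilarity distance of (S, L, tau, lab) *)
Definition is_bisim_dist (lab : S -> L) (tau : S -> S -> R)
    (d : S -> S -> R) : Prop :=
  unit_valued d /\ (forall s t, Delta lab tau d s t = d s t) /\
  (forall e, unit_valued e -> (forall s t, Delta lab tau e s t = e s t) ->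
     forall s t, d s t <= e s t).

Definition is_LMC (tau : S -> S -> R) : Prop := forall s, is_distr (tau s).

End LMC.

(* maximum of a finite set of nonnegative reals { F p | p in A } (0 if empty) *)
Notation bigmax_set A F := (\big[Num.max/0%R]_(p \in A) F p).

(* Main.v *)
Require Import Defs.
From mathcomp Require Import all_boot all_order all_algebra.
From mathcomp Require Import all_classical all_reals.
From mathcomp Require Import ereal sequences.
From mathcomp Require Import topology normedtype.
From mathcomp Require Import ring lra.
Import Order.TTheory GRing.Theory Num.Theory.
Import numFieldNormedType.Exports.
Local Open Scope classical_set_scope.
Local Open Scope ring_scope.
Set Implicit Arguments. Unset Strict Implicit.

Section T.
Variable R : realType.
Inductive cv (a : nat -> R) (l : R) : Prop :=
  CvI of (forall e, 0 < e -> exists M, forall n, (M <= n)%N -> `|a n - l| < e).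
Lemma cvE a l : cv a l <-> (forall e, 0 < e -> exists M, forall n, (M <= n)%N -> `|a n - l| < e).
Proof. by split => [[]|]; [|constructor]. Qed.
Lemma cvP (a : nat -> R) l : cv a l <-> a @ \oo --> l.
Proof.
rewrite cvE; split.
- move=> H; apply/cvgrPdist_lt => e e0; have [M HM] := H e e0.
  exists M => // n /= Mn; rewrite distrC; exact: HM.
- move=> /cvgrPdist_lt H e e0. have := H e e0. move=> [M _ HM]. exists M => n Mn.
  rewrite distrC. exact: HM.
Qed.
Lemma cvgn_cv (a : nat -> R) : cvgn a -> cv a (limn a).
Proof. by move=> H; apply/cvP. Qed.
Lemma cv_cst c : cv (fun _ => c) c.
Proof. by apply/cvE => e e0; exists 0%N => n _; rewrite subrr normr0. Qed.
Lemma cv_uniq a l l' : cv a l -> cv a l' -> l = l'.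
Proof. move=> /cvP H1 /cvP H2; exact: (cvg_unique _ H1 H2). Qed.
Lemma cv_add a b la lb : cv a la -> cv b lb -> cv (fun n => a n + b n) (la + lb).
Proof. move=> /cvP H1 /cvP H2; apply/cvP; exact: cvgD. Qed.
Lemma cv_opp a la : cv a la -> cv (fun n => - a n) (- la).
Proof. move=> /cvP H1; apply/cvP; exact: cvgN. Qed.
Lemma cv_mul a b la lb : cv a la -> cv b lb -> cv (fun n => a n * b n) (la * lb).
Proof. move=> /cvP H1 /cvP H2; apply/cvP; exact: cvgM. Qed.
Lemma cv_abs a la : cv a la -> cv (fun n => `|a n|) `|la|.
Proof. move=> /cvP H1; apply/cvP; exact: cvg_norm. Qed.
Lemma cv_sum (I : Type) (r : seq I) (P : pred I) (f : I -> nat -> R) (l : I -> R) :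
  (forall i, P i -> cv (f i) (l i)) ->
  cv (fun n => \sum_(i <- r | P i) f i n) (\sum_(i <- r | P i) l i).
Proof.
move=> H; elim: r => [|x r IH].
  rewrite big_nil; under eq_fun do rewrite big_nil; exact: cv_cst.
rewrite big_cons; under eq_fun do rewrite big_cons.
case: ifP => Px //; exact: cv_add (H _ Px) IH.
Qed.
Lemma cv_le a b la lb : (forall n, a n <= b n) -> cv a la -> cv b lb -> la <= lb.
Proof.
move=> ab /cvE Ha /cvE Hb; rewrite leNgt; apply/negP => lt.
have e0 : 0 < (la - lb) / 2 by rewrite divr_gt0 // subr_gt0.
have [M1 H1] := Ha _ e0; have [M2 H2] := Hb _ e0.
have := H1 (maxn M1 M2) (leq_maxl _ _); have := H2 (maxn M1 M2) (leq_maxr _ _).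
have := ab (maxn M1 M2).
move: (a _) (b _) => x y.
rewrite !ltr_norml => xy /andP[h1 h2] /andP[h3 h4].
have : la - (la - lb)/2 < lb + (la - lb) / 2 by lra.
lra.
Qed.
Lemma cv_squeeze0 a b : (exists M, forall n, (M <= n)%N -> 0 <= a n <= b n) -> cv b 0 -> cv a 0.
Proof.
move=> [M HM] /cvE Hb; apply/cvE => e e0; have [M2 H2] := Hb e e0; exists (maxn M M2) => n.
rewrite geq_max => /andP[h1 h2]; have := HM n h1; have := H2 n h2.
rewrite !subr0 => hb /andP[h3 h4].
rewrite ger0_norm //; rewrite ger0_norm in hb; first lra. lra.
Qed.
Lemma cv_subseq a l (f : nat -> nat) : (forall n, (n <= f n)%N) -> cv a l -> cv (a \o f) l.
Proof.
move=> hf /cvE H; apply/cvE => e e0; have [M HM] := H e e0; exists M => n Mn /=; apply: HM.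
exact: leq_trans Mn (hf n).
Qed.
Lemma cv_ge0 a l : (forall n, 0 <= a n) -> cv a l -> 0 <= l.
Proof. move=> h H; exact: (@cv_le (fun _ => 0) a 0 l h (cv_cst 0) H). Qed.
Lemma cv_cross a b c l : cv b 0 -> cv c l -> 0 < l -> (forall n, 0 <= a n) ->
  (forall n, a n * c n <= b n) -> cv a 0.
Proof.
move=> Hb /cvE Hc l0 a0 abc.
have l20 : 0 < l / 2 by rewrite divr_gt0.
have [M HM] := Hc _ l20.
apply: (@cv_squeeze0 _ (fun n => b n * (2 / l))); last first.
  by rewrite -(mul0r (2 / l)); apply: cv_mul Hb (cv_cst _).
exists M => n Mn; rewrite a0 /=.
have := HM n Mn; rewrite ltr_norml => /andP[h1 h2].
have cn : l / 2 <= c n by lra.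
have cn0 : 0 < c n by lra.
have := abc n; have := a0 n; move: (a n) (b n) => x y x0 xy.
have h : x * (l / 2) <= y.
  apply: le_trans xy; by rewrite ler_wpM2l.
have -> : x = x * (l / 2) * (2 / l) by field; rewrite gt_eqF.
rewrite ler_wpM2r // divr_ge0 // ltW //.
Qed.
End T.

Section T.
Variable R : realType.
Definition incr (f : nat -> nat) := forall n, (f n < f n.+1)%N.
Lemma incr_ge f : incr f -> forall n, (n <= f n)%N.
Proof. move=> h; elim=> // n IH; exact: leq_ltn_trans IH (h n). Qed.
Lemma incr_mono f : incr f -> forall m n, (m < n)%N -> (f m < f n)%N.
Proof.
move=> h m; elim=> // n IH; rewrite ltnS leq_eqVlt => /orP[/eqP->|/IH H]; first exact: h.
exact: ltn_trans H (h n).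
Qed.
Lemma incr_comp f g : incr f -> incr g -> incr (f \o g).
Proof. move=> hf hg n /=; apply: incr_mono => //; exact: hg. Qed.
Lemma multi_BW (I : eqType) (r : seq I) (a : I -> nat -> R) :
  (forall i n, `|a i n| <= 1) ->
  exists f, incr f /\ forall i, i \in r -> exists l, cv (a i \o f) l.
Proof.
move=> B; elim: r => [|x r [f [hf IH]]].
  by exists id; split => // n.
have bnd : bounded_fun (a x \o f).
  exists 1; split => // M M1 n _ /=; apply: le_trans (B _ _) (ltW M1).
have [g /increasing_seqP hg cg] := bolzano_weierstrass bnd.
exists (f \o g); split; first exact: incr_comp.
move=> i; rewrite inE => /orP[/eqP->|ir].
  by exists (limn ((a x \o f) \o g)); exact: (cvgn_cv cg).
have [l hl] := IH i ir; exists l.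
exact: (cv_subseq (incr_ge hg) hl).
Qed.
End T.

Section T.
Variable R : realType.
Lemma liminf0_ex (F : nat -> R) :
  limn_einf (fun i => (F i)%:E) = 0%E ->
  forall e, 0 < e -> forall M, exists2 i, (M <= i)%N & F i < e.
Proof.
move=> H e e0 M.
have h1 : (einfs (fun i => (F i)%:E) M <= 0)%E.
  rewrite -H limn_einf_lim.
  rewrite (cvg_lim _ (@cvg_einfs_sup R (fun i => (F i)%:E))) //.
  by apply: ereal_sup_ubound; exists M.
have : (einfs (fun i => (F i)%:E) M < e%:E)%E by apply: le_lt_trans h1 _; rewrite lte_fin.
move=> /ereal_inf_lt [y [i /= Mi <-]]; rewrite lte_fin => Fi.
by exists i.
Qed.
Lemma liminf0_in (F : nat -> R) : (forall i, 0 <= F i) ->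
  (forall e, 0 < e -> forall M, exists2 i, (M <= i)%N & F i < e) ->
  limn_einf (fun i => (F i)%:E) = 0%E.
Proof.
move=> F0 H.
have E : einfs (fun i => (F i)%:E) = fun _ => 0%E.
  apply/funext => n /=; apply/eqP; rewrite eq_le; apply/andP; split.
    apply/lee_addgt0Pr => e e0; rewrite add0e.
    have [i ni Fi] := H e e0 n.
    apply: le_trans (ereal_inf_lbound _) _; first by exists i.
    by rewrite lee_fin ltW.
  apply: le_ereal_inf_tmp => _ [i _ <-]; by rewrite lee_fin.
by rewrite limn_einf_lim E lim_cst.
Qed.
End T.


Section Sums.
Variable R : realType.

Lemma fsumT_seq (T : choiceType) (r : seq T) (f : T -> R) : uniq r ->
  (forall x, x \notin r -> f x = 0) ->
  \sum_(x \in [set: T]) f x = \sum_(x <- r) f x.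
Proof.
move=> ur h; rewrite -(fsbig_widen [set` r] setT f) //; last first.
  by move=> x [_ /negP xr]; apply: h.
by rewrite [RHS]fsbig_seq.
Qed.

Definition supp (T : choiceType) (f : T -> R) : seq T :=
  finmap.enum_fset (fset_set [set x | f x != 0]).

Lemma supp_uniq (T : choiceType) (f : T -> R) : uniq (supp f).
Proof. exact: finmap.fset_uniq. Qed.

Lemma mem_supp (T : choiceType) (f : T -> R) x :
  finite_set [set x | f x != 0] -> (x \in supp f) = (f x != 0).
Proof. by move=> hf; rewrite /supp in_fset_set //; apply/idP/idP => [/set_mem //|h]; apply/mem_set. Qed.

Lemma fsumT_supp (T : choiceType) (f : T -> R) :
  finite_set [set x | f x != 0] ->
  \sum_(x \in [set: T]) f x = \sum_(x <- supp f) f x.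
Proof.
move=> hf; apply: fsumT_seq; first exact: supp_uniq.
by move=> x; rewrite mem_supp // negbK => /eqP.
Qed.

Lemma distr_supp (T : choiceType) (f : T -> R) : is_distr f ->
  \sum_(x <- supp f) f x = 1.
Proof. by move=> [h0 [hf h1]]; rewrite -fsumT_supp. Qed.

Lemma fsumTT_seq (T1 T2 : choiceType) (r1 : seq T1) (r2 : seq T2)
  (f : T1 * T2 -> R) : uniq r1 -> uniq r2 ->
  (forall p, f p != 0 -> (p.1 \in r1) && (p.2 \in r2)) ->
  \sum_(p \in [set: T1 * T2]) f p = \sum_(x <- r1) \sum_(y <- r2) f (x, y).
Proof.
move=> u1 u2 h; rewrite (@fsumT_seq _ [seq (x, y) | x <- r1, y <- r2]).
- by rewrite big_allpairs.
- apply: allpairs_uniq => //; by move=> [a b] [c e] _ _ /= [-> ->].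
- move=> [x y] H; apply/eqP; apply: contraNT H => /h /andP[/= h1 h2].
  by apply: allpairs_f.
Qed.

Lemma elt_le_sum (T : eqType) (f : T -> R) (r : seq T) x : uniq r ->
  (forall y, 0 <= f y) -> x \in r -> f x <= \sum_(y <- r) f y.
Proof.
move=> ur h xr; rewrite (bigD1_seq x) //= lerDl; exact: sumr_ge0.
Qed.

Lemma sum_if_eq (T : eqType) (r : seq T) (u : T) (c : R) : uniq r ->
  \sum_(v <- r) (if u == v then c else 0) = if u \in r then c else 0.
Proof.
move=> ur; case: ifP => ur'.
  rewrite (bigD1_seq u) //= eqxx big1 ?addr0 // => i; rewrite eq_sym => /negPf ->.
  by [].
rewrite big1_seq // => v /andP[_ vr]; case: eqP => // uv; by rewrite uv vr in ur'.
Qed.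

End Sums.

Section Coupling.
Variables (R : realType) (S : countType).
Implicit Types (mu nu : S -> R) (w : S * S -> R).

Lemma distr_ge0 mu x : is_distr mu -> 0 <= mu x.
Proof. by case=> h _. Qed.

Lemma distr_fin mu : is_distr mu -> finite_set [set x | mu x != 0].
Proof. by case=> _ []. Qed.

Lemma coupling_supp mu nu w : is_coupling mu nu w ->
  forall p, w p != 0 -> (mu p.1 != 0) && (nu p.2 != 0).
Proof.
move=> [[w0 [wf w1]] [m1 m2]] [u v] /= wp.
have wpos : 0 < w (u, v) by rewrite lt_neqAle eq_sym wp w0.
have mem1 : (u, v) \in supp w by rewrite mem_supp.
apply/andP; split.
- rewrite -m1 (@fsumT_seq _ _ (undup (map snd (supp w)))) ?undup_uniq //; last first.
    move=> y; rewrite mem_undup => hy; apply/eqP; apply: contraNT hy => hy.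
    by apply/mapP; exists (u, y) => //; rewrite mem_supp.
  apply/negP => /eqP h; have : w (u, v) <= 0.
    rewrite -h (@elt_le_sum _ _ (fun y => w (u, y))) ?undup_uniq //.
    by rewrite mem_undup; apply/mapP; exists (u, v).
  by rewrite leNgt wpos.
- rewrite -m2 (@fsumT_seq _ _ (undup (map fst (supp w)))) ?undup_uniq //; last first.
    move=> y; rewrite mem_undup => hy; apply/eqP; apply: contraNT hy => hy.
    by apply/mapP; exists (y, v) => //; rewrite mem_supp.
  apply/negP => /eqP h; have : w (u, v) <= 0.
    rewrite -h (@elt_le_sum _ _ (fun y => w (y, v))) ?undup_uniq //.
    by rewrite mem_undup; apply/mapP; exists (u, v).
  by rewrite leNgt wpos.
Qed.

Lemma coupling_ge0 mu nu w p : is_coupling mu nu w -> 0 <= w p.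
Proof. by case=> [[h _] _]. Qed.

Lemma coupling_marg1 mu nu w : is_distr nu -> is_coupling mu nu w ->
  forall u, \sum_(v <- supp nu) w (u, v) = mu u.
Proof.
move=> dn hc u; have [_ [m1 _]] := hc; rewrite -m1 (@fsumT_seq _ _ (supp nu)) //.
  exact: supp_uniq.
move=> v; rewrite mem_supp ?negbK; last exact: distr_fin.
move=> /eqP nv; apply/eqP; apply: contraTT isT => h.
by have := coupling_supp hc h; rewrite /= nv eqxx andbF.
Qed.

Lemma coupling_marg2 mu nu w : is_distr mu -> is_coupling mu nu w ->
  forall v, \sum_(u <- supp mu) w (u, v) = nu v.
Proof.
move=> dm hc v; have [_ [_ m2]] := hc; rewrite -m2 (@fsumT_seq _ _ (supp mu)) //.
  exact: supp_uniq.
move=> u; rewrite mem_supp ?negbK; last exact: distr_fin.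
move=> /eqP nu0; apply/eqP; apply: contraTT isT => h.
by have := coupling_supp hc h; rewrite /= nu0 eqxx.
Qed.

Lemma coupling_sum mu nu w (F : S * S -> R) : is_distr mu -> is_distr nu ->
  is_coupling mu nu w ->
  \sum_(p \in [set: S * S]) w p * F p =
  \sum_(u <- supp mu) \sum_(v <- supp nu) w (u, v) * F (u, v).
Proof.
move=> dm dn hc; apply: fsumTT_seq; try exact: supp_uniq.
move=> p; rewrite mulf_eq0 negb_or => /andP[/(coupling_supp hc) /andP[h1 h2] _].
by rewrite !mem_supp // ?h1 ?h2 //; apply: distr_fin.
Qed.

Lemma coupling_total mu nu w : is_distr mu -> is_distr nu -> is_coupling mu nu w ->
  \sum_(u <- supp mu) \sum_(v <- supp nu) w (u, v) = 1.
Proof.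
move=> dm dn hc; under eq_bigr do rewrite (coupling_marg1 dn hc).
exact: distr_supp.
Qed.

Lemma mk_coupling mu nu w (r1 r2 : seq S) : is_distr mu ->
  (forall p, 0 <= w p) -> uniq r1 -> uniq r2 ->
  (forall p, w p != 0 -> (p.1 \in r1) && (p.2 \in r2)) ->
  (forall u, \sum_(v <- r2) w (u, v) = mu u) ->
  (forall v, \sum_(u <- r1) w (u, v) = nu v) -> is_coupling mu nu w.
Proof.
move=> dm w0 u1 u2 hs m1 m2.
have z1 u v : v \notin r2 -> w (u, v) = 0.
  by move=> h; apply/eqP; apply: contraNT h => /hs /andP[].
have z2 u v : u \notin r1 -> w (u, v) = 0.
  by move=> h; apply/eqP; apply: contraNT h => /hs /andP[].
split; [split; [exact: w0|split]|split].
- apply: (@sub_finite_set _ _ ([set` r1] `*` [set` r2])); last first.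
    by apply: finite_setX; apply: finite_seq.
  by move=> p /= /hs /andP[].
- rewrite (fsumTT_seq u1 u2 hs); under eq_bigr do rewrite m1.
  have [_ [_ <-]] := dm; symmetry; apply: fsumT_seq => // u ur.
  by rewrite -m1 big1 // => v _; apply: z2.
- by move=> u; rewrite (fsumT_seq u2) ?m1 //; move=> v; apply: z1.
- by move=> v; rewrite (fsumT_seq u1) ?m2 //; move=> u; apply: z2.
Qed.

End Coupling.

Section DeltaProps.
Variables (R : realType) (S : countType) (L : finType).
Variables (lab : S -> L) (tau : S -> S -> R).
Hypothesis Htau : is_LMC tau.

Definition csum (w : S * S -> R) (e : S -> S -> R) :=
  \sum_(p \in [set: S * S]) w p * e p.1 p.2.

Definition CS (e : S -> S -> R) s t := [set c : R | exists w,
  is_coupling (tau s) (tau t) w /\ c = csum w e].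

Lemma DeltaE e s t :
  Delta lab tau e s t = if lab s != lab t then 1 else inf (CS e s t).
Proof. by []. Qed.

Lemma csum_seq e s t w : is_coupling (tau s) (tau t) w ->
  csum w e = \sum_(u <- supp (tau s)) \sum_(v <- supp (tau t)) w (u, v) * e u v.
Proof. by move=> hc; rewrite /csum (coupling_sum (fun p => e p.1 p.2) (Htau s) (Htau t) hc). Qed.

Lemma prod_coupling s t :
  is_coupling (tau s) (tau t) (fun p => tau s p.1 * tau t p.2).
Proof.
apply: (@mk_coupling _ _ _ _ _ (supp (tau s)) (supp (tau t))).
- exact: Htau.
- by move=> p; apply: mulr_ge0; apply: distr_ge0.
- exact: supp_uniq.
- exact: supp_uniq.
- move=> p; rewrite mulf_eq0 negb_or => /andP[h1 h2].
  by rewrite !mem_supp ?h1 ?h2 //; apply: distr_fin.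
- by move=> u /=; rewrite -mulr_sumr distr_supp // mulr1.
- by move=> v /=; rewrite -mulr_suml distr_supp // mul1r.
Qed.

Lemma CS_ne e s t : CS e s t !=set0.
Proof. by eexists; exists (fun p => tau s p.1 * tau t p.2); split; first exact: prod_coupling. Qed.

Lemma CS_lb e s t : (forall u v, 0 <= e u v) -> lbound (CS e s t) 0.
Proof.
move=> e0 c [w [hc ->]]; apply: fsumr_ge0 => p _.
by apply: mulr_ge0; [apply: (coupling_ge0 _ hc)|apply: e0].
Qed.

Lemma CS_hlb e s t : (forall u v, 0 <= e u v) -> has_lbound (CS e s t).
Proof. by move=> e0; exists 0; apply: CS_lb. Qed.

Lemma CS_le1 e s t c : unit_valued e -> CS e s t c -> c <= 1.
Proof.
move=> eu [w [hc ->]]; rewrite (csum_seq _ hc).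
rewrite -(coupling_total (Htau s) (Htau t) hc).
apply: ler_sum => u _; apply: ler_sum => v _.
apply: ler_piMr; first exact: (coupling_ge0 _ hc).
by case/andP: (eu u v).
Qed.

Lemma Delta_ge0 e s t : unit_valued e -> 0 <= Delta lab tau e s t.
Proof.
move=> eu; rewrite DeltaE; case: ifP => // _.
apply: lb_le_inf; first exact: CS_ne.
by apply: CS_lb => u v; case/andP: (eu u v).
Qed.

Lemma Delta_le1 e s t : unit_valued e -> Delta lab tau e s t <= 1.
Proof.
move=> eu; rewrite DeltaE; case: ifP => // _.
have [c hc] := CS_ne e s t.
apply: le_trans (CS_le1 eu hc).
by apply: ge_inf => //; apply: CS_hlb => u v; case/andP: (eu u v).
Qed.

Lemma Delta_unit e : unit_valued e -> unit_valued (Delta lab tau e).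
Proof. by move=> eu s t; rewrite Delta_ge0 // Delta_le1. Qed.

Lemma Delta_le_coupling e s t w : (forall u v, 0 <= e u v) -> lab s = lab t ->
  is_coupling (tau s) (tau t) w -> Delta lab tau e s t <= csum w e.
Proof.
move=> e0 st hc; rewrite DeltaE st eqxx /=.
by apply: ge_inf; [apply: CS_hlb|exists w].
Qed.

Lemma Delta_mono e e' s t : (forall u v, 0 <= e u v) ->
  (forall u v, e u v <= e' u v) -> Delta lab tau e s t <= Delta lab tau e' s t.
Proof.
move=> e0 ee'; rewrite !DeltaE; case: ifP => // _.
apply: lb_le_inf; first exact: CS_ne.
move=> _ [w [hc ->]]; apply: le_trans (ge_inf (CS_hlb s t e0) _) _.
  by exists w.
rewrite !(csum_seq _ hc); apply: ler_sum => u _; apply: ler_sum => v _.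
by apply: ler_wpM2l; [apply: (coupling_ge0 _ hc)|apply: ee'].
Qed.

Lemma Delta_approx e s t eps : (forall u v, 0 <= e u v) -> lab s = lab t ->
  0 < eps -> exists w, is_coupling (tau s) (tau t) w /\
    csum w e < Delta lab tau e s t + eps.
Proof.
move=> e0 st eps0; rewrite DeltaE st eqxx /=.
have [c [w [hc ->]] hlt] := inf_adherent eps0 (conj (CS_ne e s t) (CS_hlb s t e0)).
by exists w.
Qed.

Variable d : S -> S -> R.
Hypothesis Hd : is_bisim_dist lab tau d.

Lemma KT e : unit_valued e -> (forall s t, Delta lab tau e s t <= e s t) ->
  forall s t, d s t <= e s t.
Proof.
move=> eu epre.
pose G := [set g : S -> S -> R | unit_valued g /\ (forall s t, g s t <= e s t) /\
   (forall s t, Delta lab tau g s t <= g s t)].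
have Ge : G e by split => //; split => // s t.
pose f s t := inf [set g s t | g in G].
have fne s t : [set g s t | g in G] !=set0 by exists (e s t); exists e.
have flb s t : lbound [set g s t | g in G] 0.
  by move=> _ [g [gu _] <-]; case/andP: (gu s t).
have fle g s t : G g -> f s t <= g s t.
  by move=> Gg; apply: ge_inf; [exists 0; apply: flb|exists g].
have fu : unit_valued f.
  move=> s t; apply/andP; split; first by apply: lb_le_inf.
  apply: le_trans (fle _ _ _ Ge) _; by case/andP: (eu s t).
have f0 u v : 0 <= f u v by case/andP: (fu u v).
have fpre s t : Delta lab tau f s t <= f s t.
  apply: lb_le_inf => // _ [g Gg <-].
  apply: le_trans (Delta_mono s t f0 (fun u v => fle g u v Gg)) _.
  by case: Gg => _ [_ ->].
have GD : G (Delta lab tau f).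
  split; first exact: Delta_unit.
  split; first by move=> s t; apply: le_trans (fpre s t) (fle _ _ _ Ge).
  by move=> s t; apply: (Delta_mono s t _ fpre) => u v; apply: Delta_ge0.
have ffix s t : Delta lab tau f s t = f s t.
  by apply/eqP; rewrite eq_le fpre fle.
move=> s t; have [_ [_ Hmin]] := Hd.
apply: le_trans (Hmin f fu ffix s t) _.
exact: fle.
Qed.

End DeltaProps.

Section Glue.
Variables (R : realType) (S : countType).
Implicit Types (mu nu rho : S -> R) (w : S * S -> R).

Lemma glue mu nu rho w1 w2 : is_distr mu -> is_distr nu -> is_distr rho ->
  is_coupling mu nu w1 -> is_coupling nu rho w2 ->
  exists w, is_coupling mu rho w /\
   forall (e f g : S -> S -> R), (forall u v x, e u x <= f u v + g v x) ->
   \sum_(u <- supp mu) \sum_(x <- supp rho) w (u, x) * e u x <=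
   \sum_(u <- supp mu) \sum_(v <- supp nu) w1 (u, v) * f u v +
   \sum_(v <- supp nu) \sum_(x <- supp rho) w2 (v, x) * g v x.
Proof.
move=> dm dn dr c1 c2.
set r1 := supp mu; set r2 := supp nu; set r3 := supp rho.
pose pi u v x := w1 (u, v) * w2 (v, x) / nu v.
have pi0 u v x : 0 <= pi u v x.
  by rewrite /pi divr_ge0 ?mulr_ge0 ?(coupling_ge0 _ c1) ?(coupling_ge0 _ c2) ?distr_ge0.
have I1 u v : v \in r2 -> \sum_(x <- r3) pi u v x = w1 (u, v).
  move=> vr; rewrite /pi; under eq_bigr do rewrite mulrAC.
  rewrite -mulr_sumr (coupling_marg1 dr c2) divfK //.
  by rewrite -mem_supp //; apply: distr_fin.
have I2 v x : v \in r2 -> \sum_(u <- r1) pi u v x = w2 (v, x).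
  move=> vr; rewrite /pi -mulr_suml -mulr_suml (coupling_marg2 dm c1) mulrAC divff ?mul1r //.
  by rewrite -mem_supp //; apply: distr_fin.
pose w p := \sum_(v <- r2) pi p.1 v p.2.
have hw : is_coupling mu rho w.
  apply: (@mk_coupling _ _ _ _ _ r1 r3) => //.
  - by move=> p; apply: sumr_ge0 => v _.
  - exact: supp_uniq.
  - exact: supp_uniq.
  - move=> [u x] /= hp.
    have [v vr hv] : exists2 v, v \in r2 & pi u v x != 0.
      apply: contrapT => hn; move/negP: hp; apply; apply/eqP.
      rewrite /w /= big1_seq // => v /andP[_ vr].
      case: (eqVneq (pi u v x) 0) => // hv; exfalso; apply: hn; by exists v.
    move: hv; rewrite /pi !mulf_eq0 !negb_or => /andP[/andP[h1 h2] _].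
    have /andP[h3 _] := coupling_supp c1 h1; have /andP[_ h4] := coupling_supp c2 h2.
    by rewrite !mem_supp ?h3 ?h4 //; apply: distr_fin.
  - move=> u; rewrite /w /= exchange_big /= big_seq.
    under eq_bigr => v vr do rewrite I1 //.
    by rewrite -big_seq (coupling_marg1 dn c1).
  - move=> x; rewrite /w /= exchange_big /= big_seq.
    under eq_bigr => v vr do rewrite I2 //.
    by rewrite -big_seq (coupling_marg2 dn c2).
exists w; split => // e f g efg.
have step1 : \sum_(u <- r1) \sum_(x <- r3) w (u, x) * e u x <=
    \sum_(u <- r1) \sum_(x <- r3) \sum_(v <- r2) (pi u v x * f u v + pi u v x * g v x).
  apply: ler_sum => u _; apply: ler_sum => x _; rewrite /w /= mulr_suml.
  apply: ler_sum => v _; rewrite -mulrDr; apply: ler_wpM2l => //.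
rewrite (le_trans step1) // le_eqVlt; apply/orP; left; apply/eqP.
under eq_bigr do under eq_bigr do rewrite big_split /=.
under eq_bigr do rewrite big_split /=.
rewrite big_split /=; congr (_ + _).
  apply: eq_bigr => u _; rewrite exchange_big /= big_seq [RHS]big_seq.
  apply: eq_bigr => v vr; by rewrite -mulr_suml I1.
rewrite exchange_big /=; under eq_bigr do rewrite exchange_big /=.
rewrite exchange_big /= big_seq [RHS]big_seq.
apply: eq_bigr => v vr; apply: eq_bigr => x _; by rewrite -mulr_suml I2.
Qed.

End Glue.

Section Metric.
Variables (R : realType) (S : countType) (L : finType).
Variables (lab : S -> L) (tau : S -> S -> R).
Hypothesis Htau : is_LMC tau.
Variable d : S -> S -> R.
Hypothesis Hd : is_bisim_dist lab tau d.

Let du : unit_valued d. Proof. by case: Hd. Qed.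
Let d0 u v : 0 <= d u v. Proof. by case/andP: (du u v). Qed.
Let dfix s t : Delta lab tau d s t = d s t. Proof. by case: Hd => _ []. Qed.

Lemma diag_coupling (mu : S -> R) : is_distr mu ->
  is_coupling mu mu (fun p => if p.1 == p.2 then mu p.1 else 0).
Proof.
move=> dm; apply: (@mk_coupling _ _ _ _ _ (supp mu) (supp mu)) => //.
- by move=> p; case: ifP => // _; apply: distr_ge0.
- exact: supp_uniq.
- exact: supp_uniq.
- move=> [u v] /=; case: (eqVneq u v) => [<-|uv] h; last by rewrite eqxx in h.
  by rewrite !mem_supp ?h //; apply: distr_fin.
- move=> u /=; rewrite sum_if_eq ?supp_uniq //; case: ifP => // h.
  apply/esym/eqP; move/negbT: h; rewrite mem_supp ?negbK //; exact: distr_fin.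
- move=> v /=; rewrite (eq_bigr (fun u => if v == u then mu v else 0)).
    rewrite sum_if_eq ?supp_uniq //; case: ifP => // h.
    apply/esym/eqP; move/negbT: h; rewrite mem_supp ?negbK //; exact: distr_fin.
  by move=> u _ /=; rewrite eq_sym; case: eqP => [->|].
Qed.

Lemma d_refl u : d u u = 0.
Proof.
pose e' x y := if x == y then 0 else d x y.
have e'u : unit_valued e'.
  by move=> x y; rewrite /e'; case: ifP => // _; rewrite lexx ler01.
have e'0 x y : 0 <= e' x y by case/andP: (e'u x y).
have pre s t : Delta lab tau e' s t <= e' s t.
  rewrite {2}/e'; case: eqP => [<-|st].
    apply: le_trans (Delta_le_coupling e'0 (erefl (lab s)) (diag_coupling (Htau s))) _.
    rewrite (csum_seq Htau _ (diag_coupling (Htau s))) big1 // => x _.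
    rewrite big1 // => y _ /=; rewrite /e'; case: eqP => _; by rewrite ?mulr0 ?mul0r.
  rewrite -dfix; apply: Delta_mono => // x y; rewrite /e'; case: ifP => //.
have := KT Htau Hd e'u pre u u; rewrite /e' eqxx => h.
by apply/eqP; rewrite eq_le h d0.
Qed.

Lemma CS_swap e s t : CS tau (fun u v => e v u) s t `<=` CS tau e t s.
Proof.
move=> _ [w [hc ->]].
have hc' : is_coupling (tau t) (tau s) (fun p => w (p.2, p.1)).
  apply: (@mk_coupling _ _ _ _ _ (supp (tau t)) (supp (tau s))) => //.
  - by move=> p; apply: (coupling_ge0 _ hc).
  - exact: supp_uniq.
  - exact: supp_uniq.
  - move=> [x y] /= /(coupling_supp hc) /andP[h1 h2].
    by rewrite !mem_supp ?h1 ?h2 //; apply: distr_fin.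
  - by move=> x /=; rewrite (coupling_marg2 (Htau s) hc).
  - by move=> y /=; rewrite (coupling_marg1 (Htau t) hc).
exists (fun p => w (p.2, p.1)); split => //.
rewrite (csum_seq Htau _ hc) (csum_seq Htau _ hc').
by rewrite exchange_big.
Qed.

Lemma Delta_swap e s t :
  Delta lab tau (fun u v => e v u) s t = Delta lab tau e t s.
Proof.
rewrite !DeltaE eq_sym; case: ifP => // _; congr inf.
apply/seteqP; split; first exact: CS_swap.
move=> c hc; have := @CS_swap (fun u v => e v u) t s c; apply; exact: hc.
Qed.

Lemma d_sym u v : d u v = d v u.
Proof.
have h : forall x y, d x y <= d y x.
  apply: (KT Htau Hd) => [x y|x y]; first exact: du.
  by rewrite Delta_swap dfix.
by apply/eqP; rewrite eq_le !h.
Qed.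

Lemma d_triangle u v x : d u x <= d u v + d v x.
Proof.
pose e a b := inf [set Num.min 1 (d a c + d c b) | c in [set: S]].
have ne a b : [set Num.min 1 (d a c + d c b) | c in [set: S]] !=set0.
  by exists (Num.min 1 (d a a + d a b)); exists a.
have lb a b : lbound [set Num.min 1 (d a c + d c b) | c in [set: S]] 0.
  by move=> _ [c _ <-]; rewrite le_min ler01 addr_ge0.
have eb a c b : e a b <= Num.min 1 (d a c + d c b).
  by apply: ge_inf; [exists 0; apply: lb|exists c].
have eu : unit_valued e.
  move=> a b; rewrite lb_le_inf //=.
  by apply: le_trans (eb a a b) _; rewrite ge_min lexx.
have e0 a b : 0 <= e a b by case/andP: (eu a b).
have eb2 a c b : e a b <= d a c + d c b.
  by apply: le_trans (eb a c b) _; rewrite ge_min lexx orbT.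
have pre a b : Delta lab tau e a b <= e a b.
  apply: lb_le_inf => // _ [c _ <-]; rewrite le_min Delta_le1 //=.
  have D1 := Delta_le1 lab Htau a b eu.
  case: (eqVneq (lab a) (lab c)) => [ac|ac]; last first.
    have -> : d a c = 1 by rewrite -dfix DeltaE ac.
    by apply: le_trans D1 _; rewrite lerDl.
  case: (eqVneq (lab c) (lab b)) => [cb|cb]; last first.
    have -> : d c b = 1 by rewrite -dfix DeltaE cb.
    by apply: le_trans D1 _; rewrite lerDr.
  apply/ler_addgt0Pr => eps eps0.
  have eps2 : 0 < eps / 2 by rewrite divr_gt0.
  have [w1 [c1 h1]] := Delta_approx Htau d0 ac eps2.
  have [w2 [c2 h2]] := Delta_approx Htau d0 cb eps2.
  have [w [cw hw]] := glue (Htau a) (Htau c) (Htau b) c1 c2.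
  have := Delta_le_coupling e0 (etrans ac cb) cw.
  rewrite (csum_seq Htau _ cw) => hD.
  have := hw e d d eb2; rewrite -(csum_seq Htau _ c1) -(csum_seq Htau _ c2).
  rewrite !dfix in h1 h2; lra.
have := KT Htau Hd eu pre u x; move=> h; apply: le_trans h (eb2 _ v _).
Qed.

End Metric.


Section Helpers.
Variable R : realType.

Definition fseq (T : choiceType) (A : set T) : seq T := finmap.enum_fset (fset_set A).
Lemma fseq_uniq (T : choiceType) (A : set T) : uniq (fseq A).
Proof. exact: finmap.fset_uniq. Qed.
Lemma mem_fseq (T : choiceType) (A : set T) x : finite_set A -> (x \in fseq A) <-> A x.
Proof.
move=> hA; rewrite /fseq in_fset_set //; split; [exact: set_mem|exact: mem_set].
Qed.

Lemma distr_le1 (T : choiceType) (f : T -> R) x : is_distr f -> f x <= 1.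
Proof.
move=> df; case: (eqVneq (f x) 0) => [->|h]; first exact: ler01.
rewrite -(distr_supp df).
have hx : x \in supp f by rewrite mem_supp //; case: df => _ [].
exact: (elt_le_sum (supp_uniq f) df.1 hx).
Qed.

Lemma bigmax_ge0_seq (I : Type) (r : seq I) (F : I -> R) :
  0 <= \big[Num.max/0]_(i <- r) F i.
Proof. by elim: r => [|x r IH]; rewrite ?big_nil // big_cons le_max IH orbT. Qed.

Lemma bigmax_le_seq (I : eqType) (r : seq I) (F : I -> R) c : 0 <= c ->
  (forall i, i \in r -> F i <= c) -> \big[Num.max/0]_(i <- r) F i <= c.
Proof.
move=> c0; elim: r => [|x r IH] h; rewrite ?big_nil // big_cons ge_max h ?mem_head //=.
by apply: IH => i ir; apply: h; rewrite inE ir orbT.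
Qed.

Lemma bigmax_ge_seq (I : eqType) (r : seq I) (F : I -> R) x : x \in r ->
  F x <= \big[Num.max/0]_(i <- r) F i.
Proof.
elim: r => // y r IH; rewrite inE big_cons le_max => /orP[/eqP->|/IH->]; rewrite ?lexx //.
by rewrite orbT.
Qed.

Lemma bigmax_set_ge0 (T : choiceType) (A : set T) (F : T -> R) : 0 <= bigmax_set A F.
Proof. exact: bigmax_ge0_seq. Qed.

Lemma bigmax_set_le (T : choiceType) (A : set T) (F : T -> R) c : 0 <= c ->
  (forall p, A p -> F p <= c) -> bigmax_set A F <= c.
Proof.
move=> c0 h; case: finite_supportP; rewrite ?big_nil // => X XA _ _.
by apply: bigmax_le_seq => // i /XA; apply: h.
Qed.

Lemma bigmax_set_ge (T : choiceType) (A : set T) (F : T -> R) p : finite_set A ->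
  A p -> F p <= bigmax_set A F.
Proof.
move=> fA Ap; case: (eqVneq (F p) 0) => [->|h]; first exact: bigmax_set_ge0.
apply: bigmax_ge_seq; rewrite in_finite_support; last exact: finite_setIl.
by apply/mem_set; split => //; apply/eqP.
Qed.

Lemma cv_lim (a : nat -> R) l : cv a l -> limn a = l.
Proof. by move=> /cvP h; apply: cvg_lim. Qed.

Lemma cv_abs0 (a : nat -> R) : cv (fun n => `|a n|) 0 -> cv a 0.
Proof. by move=> /cvE h; apply/cvE => e e0; have [M HM] := h e e0; exists M => n /HM; rewrite !subr0 normr_id. Qed.

Lemma cv_harm : cv (fun n => (n.+1%:R : R)^-1) 0.
Proof. by apply/cvP; exact: cvg_harmonic. Qed.

Lemma prob_seq (T : choiceType) (f : T -> R) (B : set T) (r : seq T) :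
  uniq r -> B `<=` [set` r] ->
  prob_of f B = \sum_(x <- r) (if x \in B then f x else 0).
Proof.
move=> ur Br; rewrite /prob_of fsbig_mkcond (fsumT_seq ur) //.
move=> x xr; rewrite /patch; case: ifP => // /set_mem /Br /= xr'.
by rewrite xr' in xr.
Qed.

Lemma coupling_margr1 (S : countType) (mu nu : S -> R) w (r : seq S) :
  is_coupling mu nu w -> uniq r -> (forall v, nu v != 0 -> v \in r) ->
  forall u, \sum_(v <- r) w (u, v) = mu u.
Proof.
move=> hc ur hr u; have [_ [m1 _]] := hc; rewrite -m1 (fsumT_seq ur) //.
move=> v vr; apply/eqP; apply: contraNT vr => h.
by have /andP[_ /hr] := coupling_supp hc h.
Qed.

Lemma coupling_margr2 (S : countType) (mu nu : S -> R) w (r : seq S) :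
  is_coupling mu nu w -> uniq r -> (forall u, mu u != 0 -> u \in r) ->
  forall v, \sum_(u <- r) w (u, v) = nu v.
Proof.
move=> hc ur hr v; have [_ [_ m2]] := hc; rewrite -m2 (fsumT_seq ur) //.
move=> u ur'; apply/eqP; apply: contraNT ur' => h.
by have /andP[/hr ? _] := coupling_supp hc h.
Qed.

Lemma cv_sum_seq (I : eqType) (r : seq I) (f : I -> nat -> R) (l : I -> R) :
  (forall i, i \in r -> cv (f i) (l i)) ->
  cv (fun n => \sum_(i <- r) f i n) (\sum_(i <- r) l i).
Proof.
elim: r => [|x r IH] H.
  rewrite big_nil; under eq_fun do rewrite big_nil; exact: cv_cst.
rewrite big_cons; under eq_fun do rewrite big_cons.
apply: cv_add; first by apply: H; rewrite mem_head.
by apply: IH => i ir; apply: H; rewrite inE ir orbT.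
Qed.

End Helpers.

Unset Implicit Arguments.

Theorem mainTheorem12 (R : realType) (S : countType) (L : finType)
  (s_inhab : S) (lab : S -> L) (tau : nat -> S -> S -> R)
  (d : nat -> S -> S -> R)
  (Hlmc : forall i, is_LMC (tau i))
  (Hd : forall i, is_bisim_dist lab (tau i) (d i))
  (Nb : S -> set S) (HNfin : forall s, finite_set (Nb s))
  (HNsupp : forall i s x, tau i s x != 0 -> Nb s x)
  (S0 : set S) (HS0fin : finite_set S0) (HS0ne : S0 !=set0)
  (HS0 : limn_einf (fun i => (bigmax_set (S0 `*` S0) (fun p => d i p.1 p.2))%:E)
           = 0%E) :
  let N := \bigcup_(s in S0) Nb s in
  exists (tauS : S -> S -> R) (k : nat) (P : 'I_k -> set S) (mu : 'I_k -> R),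
    (forall s, S0 s -> is_distr (tauS s)) /\
    (* {P j} is a partition of N *)
    (forall j, P j !=set0) /\
    (forall j j', j != j' -> P j `&` P j' = set0) /\
    \bigcup_(j in [set: 'I_k]) P j = N /\
    (* mu is a distribution on {1..k} *)
    is_distr mu /\
    (forall s j, S0 s -> prob_of (tauS s) (P j) = mu j) /\
    limn_einf (fun i =>
      (Num.max
        (bigmax_set S0 (fun s => l1dist (tau i s) (tauS s)))
        (Num.max
          (bigmax_set (S0 `*` [set: 'I_k])
             (fun p => `|prob_of (tau i p.1) (P p.2) - mu p.2|))
          (bigmax_set [set p : S * S | exists j, P j p.1 /\ P j p.2]
             (fun p => d i p.1 p.2))))%:E) = 0%E.
Proof.
move=> N.
have dU i : unit_valued (d i) by case: (Hd i).
have d0 i u v : 0 <= d i u v by case/andP: (dU i u v).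
have d1 i u v : d i u v <= 1 by case/andP: (dU i u v).
have dfix i s t : Delta lab (tau i) (d i) s t = d i s t by case: (Hd i) => _ [].
have dsym i u v : d i u v = d i v u := @d_sym _ _ _ lab (tau i) (Hlmc i) (d i) (Hd i) u v.
have drefl i u : d i u u = 0 := @d_refl _ _ _ lab (tau i) (Hlmc i) (d i) (Hd i) u.
have dtri i u v x : d i u x <= d i u v + d i v x :=
  @d_triangle _ _ _ lab (tau i) (Hlmc i) (d i) (Hd i) u v x.
have t0 i s x : 0 <= tau i s x by case: (Hlmc i s) => h _; apply: h.
have t1 i s x : tau i s x <= 1 := distr_le1 x (Hlmc i s).
have fN : finite_set N by apply: bigcup_finite => // s _; apply: HNfin.
pose ns := fseq N.
have nsU : uniq ns := fseq_uniq N.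
have nsP x : x \in ns <-> N x := mem_fseq x fN.
pose s0s := fseq S0.
have s0U : uniq s0s := fseq_uniq S0.
have s0P x : x \in s0s <-> S0 x := mem_fseq x HS0fin.
have tN i s x : S0 s -> tau i s x != 0 -> N x.
  by move=> Ss h; exists s => //; apply: HNsupp h.
have tz i s x : S0 s -> x \notin ns -> tau i s x = 0.
  move=> Ss xn; apply/eqP; apply: contraNT xn => h; apply/nsP; exact: tN h.
pose m i := bigmax_set (S0 `*` S0) (fun p => d i p.1 p.2).
have mex := liminf0_ex HS0.
have /choice [g hg] : forall nM : nat * nat,
    exists i, (nM.2 <= i)%N /\ m i < (nM.1.+1%:R)^-1.
  move=> [n M]; have hp : 0 < (n.+1%:R : R)^-1 by rewrite invr_gt0 ltr0Sn.
  have [i Mi hi] := mex _ hp M.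
  by exists i.
pose phi0 := fix f n := if n is n'.+1 then g (n, (f n').+1) else g (0%N, 0%N).
have phi0_incr : incr phi0 by move=> n; exact: (hg (n.+1, (phi0 n).+1)).1.
have phi0_m n : m (phi0 n) < (n.+1%:R)^-1.
  by case: n => [|n]; [exact: (hg (0%N, 0%N)).2|exact: (hg (n.+1, (phi0 n).+1)).2].
pose I := ((S * S) + (S * S))%type.
pose a (i : I) n := match i with inl p => tau (phi0 n) p.1 p.2 | inr p => d (phi0 n) p.1 p.2 end.
have aB i n : `|a i n| <= 1 by case: i => p /=; rewrite ger0_norm.
have [phi1 [phi1_incr hcv]] := multi_BW
  ([seq inl (s, x) | s <- s0s, x <- ns] ++ [seq inr (u, v) | u <- ns, v <- ns]) aB.
pose phi := phi0 \o phi1.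
have phi_incr : incr phi := incr_comp phi0_incr phi1_incr.
have phi1_ge := incr_ge phi1_incr.
pose tauS s x := limn (fun n => tau (phi n) s x).
pose dl u v := limn (fun n => d (phi n) u v).
have cvT s x : S0 s -> cv (fun n => tau (phi n) s x) (tauS s x).
  move=> Ss; case: (boolP (x \in ns)) => xn.
  - have [l hl] : exists l, cv (a (inl (s, x)) \o phi1) l.
      apply: hcv; rewrite mem_cat; apply/orP; left.
      by apply: (allpairs_f (fun s x => inl (s, x))) => //; apply/s0P.
    have hl' : cv (fun n => tau (phi n) s x) l := hl.
    by rewrite /tauS (cv_lim hl').
  - have E : (fun n => tau (phi n) s x) = fun=> 0.
      by apply/funext => n; apply: tz.
    rewrite /tauS E (cv_lim (cv_cst 0)); exact: cv_cst.
have cvD u v : N u -> N v -> cv (fun n => d (phi n) u v) (dl u v).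
  move=> Nu Nv; have [l hl] : exists l, cv (a (inr (u, v)) \o phi1) l.
    apply: hcv; rewrite mem_cat; apply/orP; right.
    by apply: (allpairs_f (fun u v => inr (u, v))); apply/nsP.
  have hl' : cv (fun n => d (phi n) u v) l := hl.
  by rewrite /dl (cv_lim hl').
have dl0 u v : N u -> N v -> 0 <= dl u v.
  by move=> Nu Nv; apply: (cv_ge0 _ (cvD u v Nu Nv)) => n.
have dlrefl u : dl u u = 0.
  have E : (fun n => d (phi n) u u) = fun=> 0 by apply/funext => n; apply: drefl.
  by rewrite /dl E (cv_lim (cv_cst 0)).
have dlsym u v : dl u v = dl v u.
  have E : (fun n => d (phi n) u v) = (fun n => d (phi n) v u).
    by apply/funext => n; apply: dsym.
  by rewrite /dl E.
have dltri u v x : N u -> N v -> N x -> dl u x <= dl u v + dl v x.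
  move=> Nu Nv Nx; apply: (cv_le (fun n => dtri (phi n) u v x) (cvD u x Nu Nx)).
  exact: cv_add (cvD u v Nu Nv) (cvD v x Nv Nx).
have cvS0 s t : S0 s -> S0 t -> cv (fun n => d (phi n) s t) 0.
  move=> Ss St; apply: (cv_squeeze0 _ (@cv_harm R)).
  exists 0%N => n _; rewrite d0 /=.
  have h1 : d (phi n) s t <= m (phi n).
    apply: (bigmax_set_ge (fun p => d (phi n) p.1 p.2) (p := (s, t))) => //.
    exact: finite_setX.
  apply: le_trans h1 _; apply: le_trans (ltW (phi0_m (phi1 n))) _.
  rewrite ler_pV2 ?inE ?unitfE ?pnatr_eq0 ?ltr0Sn //= ler_nat ltnS.
  exact: phi1_ge.
have lab_eq s t : S0 s -> S0 t -> lab s = lab t.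
  move=> Ss St; apply/eqP; apply: contraT => hneq.
  have h1 n : d (phi n) s t = 1 by rewrite -dfix DeltaE hneq.
  have /cvE hc := cvS0 s t Ss St.
  have h2 : (0:R) < 1/2 by lra.
  have [M HM] := hc _ h2.
  by have := HM M (leqnn M); rewrite h1 subr0 normr1; lra.
pose cls u := [set v | N v /\ dl u v = 0].
have clsN u : cls u `<=` [set` ns] by move=> x [Nx _]; apply/nsP.
have mass s t u0 : S0 s -> S0 t -> N u0 ->
    prob_of (tauS s) (cls u0) = prob_of (tauS t) (cls u0).
  move=> Ss St Nu0.
  set B := cls u0.
  have hlab := lab_eq s t Ss St.
  have /choice [W hW] : forall n, exists w,
      is_coupling (tau (phi n) s) (tau (phi n) t) w /\
      csum w (d (phi n)) < d (phi n) s t + (n.+1%:R)^-1.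
    move=> n; have hp : 0 < (n.+1%:R : R)^-1 by rewrite invr_gt0 ltr0Sn.
    have [w [hc hw]] := Delta_approx (Hlmc (phi n)) (d0 (phi n)) hlab hp.
    by exists w; rewrite -dfix.
  pose ms n := \sum_(x <- ns) (if x \in B then tau (phi n) s x else 0).
  pose mt n := \sum_(x <- ns) (if x \in B then tau (phi n) t x else 0).
  have cvms : cv ms (prob_of (tauS s) B).
    rewrite (prob_seq _ nsU (clsN u0)); apply: cv_sum => x _.
    by case: ifP => _; [exact: cvT|exact: cv_cst].
  have cvmt : cv mt (prob_of (tauS t) B).
    rewrite (prob_seq _ nsU (clsN u0)); apply: cv_sum => x _.
    by case: ifP => _; [exact: cvT|exact: cv_cst].
  pose X n := \sum_(u <- ns) \sum_(v <- ns)
     (if (u \in B) != (v \in B) then W n (u, v) else 0).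
  have key : cv (fun n => ms n - mt n) 0.
    apply: cv_abs0; apply: (@cv_squeeze0 _ _ X).
      exists 0%N => n _; rewrite normr_ge0 /=.
      have hc := (hW n).1.
      have W0 p : 0 <= W n p := coupling_ge0 p hc.
      have m1 u : \sum_(v <- ns) W n (u, v) = tau (phi n) s u.
        by apply: (coupling_margr1 hc nsU) => v h; apply/nsP; apply: tN h.
      have m2 v : \sum_(u <- ns) W n (u, v) = tau (phi n) t v.
        by apply: (coupling_margr2 hc nsU) => u h; apply/nsP; apply: tN h.
      have e1 : ms n = \sum_(u <- ns) \sum_(v <- ns) (if u \in B then W n (u, v) else 0).
        by apply: eq_bigr => u _; case: ifP => _; [rewrite m1|rewrite big1].
      have e2 : mt n = \sum_(u <- ns) \sum_(v <- ns) (if v \in B then W n (u, v) else 0).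
        rewrite [RHS]exchange_big /=.
        by apply: eq_bigr => v _; case: ifP => _; [rewrite m2|rewrite big1].
      have -> : ms n - mt n = \sum_(u <- ns) \sum_(v <- ns)
          ((if u \in B then W n (u, v) else 0) - (if v \in B then W n (u, v) else 0)).
        by rewrite e1 e2 -sumrB; apply: eq_bigr => u _; rewrite sumrB.
      apply: le_trans (ler_norm_sum _ _ _) _; apply: ler_sum => u _.
      apply: le_trans (ler_norm_sum _ _ _) _; apply: ler_sum => v _.
      by case: ifP; case: ifP => //= _ _; rewrite ?subrr ?subr0 ?sub0r ?normrN ?normr0 ?ger0_norm.
    have EX : X = fun n => \sum_(u <- ns | u \in ns) \sum_(v <- ns | v \in ns)
        (if (u \in B) != (v \in B) then W n (u, v) else 0).
      apply/funext => n; rewrite /X big_seq; apply: eq_bigr => u _; by rewrite big_seq.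
    have : cv X (\sum_(u <- ns | u \in ns) \sum_(v <- ns | v \in ns) 0).
      rewrite EX; apply: cv_sum => u un; apply: cv_sum => v vn.
      destruct ((u \in B) != (v \in B)) eqn:hcross; last exact: (cv_cst 0).
      have Nu : N u by apply/nsP.
      have Nv : N v by apply/nsP.
      have dpos : 0 < dl u v.
        rewrite lt_neqAle dl0 // andbT eq_sym; apply/negP => /eqP h0.
        have hB : forall a1 b1, N a1 -> N b1 -> dl a1 b1 = 0 -> a1 \in B -> b1 \in B.
          move=> a1 b1 Na Nb1 hab /set_mem [_ ha]; apply/mem_set; split => //.
          apply/eqP; rewrite eq_le dl0 //= andbT.
          by apply: le_trans (dltri u0 a1 b1 Nu0 Na Nb1) _; rewrite ha hab addr0.
        move: hcross; case: (boolP (u \in B)) => hu; case: (boolP (v \in B)) => hv //=.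
        - by rewrite (hB u v Nu Nv h0 hu) in hv.
        - by rewrite (hB v u Nv Nu (etrans (dlsym v u) h0) hv) in hu.
      have hb : cv (fun n => d (phi n) s t + (n.+1%:R)^-1) 0.
        by rewrite -[0 in X in cv _ X](addr0 0); apply: cv_add (cvS0 s t Ss St) (@cv_harm R).
      apply: (cv_cross hb (cvD u v Nu Nv) dpos).
        by move=> n; apply: (coupling_ge0 _ (hW n).1).
      move=> n; apply: le_trans (ltW (hW n).2).
      have hc := (hW n).1.
      have W0 p : 0 <= W n p := coupling_ge0 p hc.
      rewrite (csum_seq (Hlmc (phi n)) _ hc).
      case: (eqVneq (W n (u, v)) 0) => [->|hW0].
        by rewrite mul0r; apply: sumr_ge0 => a1 _; apply: sumr_ge0 => b1 _; rewrite mulr_ge0.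
      have /andP[hs ht] := coupling_supp hc hW0; rewrite /= in hs ht.
      have hus : u \in supp (tau (phi n) s) by rewrite mem_supp //; apply: distr_fin; apply: Hlmc.
      have hvt : v \in supp (tau (phi n) t) by rewrite mem_supp //; apply: distr_fin; apply: Hlmc.
      apply: le_trans (elt_le_sum (f := fun b1 => W n (u, b1) * d (phi n) u b1) (supp_uniq _) _ hvt) _.
        by move=> b1; rewrite mulr_ge0.
      apply: (elt_le_sum (f := fun a1 => \sum_(b1 <- supp (tau (phi n) t)) W n (a1, b1) * d (phi n) a1 b1) (supp_uniq _) _ hus).
      by move=> a1; apply: sumr_ge0 => b1 _; rewrite mulr_ge0.
    by rewrite big1 // => u _; rewrite big1.
  have := cv_uniq (cv_add cvms (cv_opp cvmt)) key.
  by move/eqP; rewrite subr_eq0 => /eqP.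
have cls_mem u : N u -> cls u u by move=> Nu; split.
have cls_eq u u' x : N u -> N u' -> cls u x -> cls u' x -> cls u = cls u'.
  have H : forall u u' x, N u -> N u' -> cls u x -> cls u' x -> cls u `<=` cls u'.
    move=> a1 a2 y N1 N2 [Ny h1] [_ h2] v [Nv h3]; split => //.
    apply/eqP; rewrite eq_le dl0 //= andbT.
    apply: le_trans (dltri a2 y v N2 Ny Nv) _; rewrite h2 add0r.
    by apply: le_trans (dltri y a1 v Ny N1 Nv) _; rewrite dlsym h1 h3 addr0.
  move=> Nu Nu' hx hx'; apply/seteqP; split; [exact: (H u u' x)|exact: (H u' u x)].
pose C := cls @` N.
have fC : finite_set C := finite_image _ fN.
pose cs := fseq C.
have csU : uniq cs := fseq_uniq C.
have csP X : X \in cs <-> C X := mem_fseq X fC.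
pose k := size cs.
pose P (j : 'I_k) := nth set0 cs j.
have hP j : exists2 u, N u & P j = cls u.
  have : P j \in cs by apply: mem_nth.
  by move=> /csP [u Nu <-]; exists u.
have [s0 Ss0] := HS0ne.
pose mu j := prob_of (tauS s0) (P j).
have PN j : P j `<=` [set` ns].
  by have [u _ ->] := hP j; apply: clsN.
have Pdisj j j' x : P j x -> P j' x -> j = j'.
  move=> h1 h2; have [u Nu E1] := hP j; have [u' Nu' E2] := hP j'.
  rewrite E1 in h1; rewrite E2 in h2.
  have E : P j = P j' by rewrite E1 E2; apply: (cls_eq u u' x).
  apply/val_inj/eqP; rewrite -(nth_uniq set0 _ _ csU) ?ltn_ord //.
  by apply/eqP.
have Pcov x : N x -> exists j, P j x.
  move=> Nx; have hx : cls x \in cs by apply/csP; exists x.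
  exists (Ordinal (etrans (index_mem _ _) hx)).
  by rewrite /P /= nth_index //; apply: cls_mem.
have tS0 s x : S0 s -> 0 <= tauS s x.
  by move=> Ss; apply: (cv_ge0 _ (cvT s x Ss)) => n.
have tSz s x : S0 s -> x \notin ns -> tauS s x = 0.
  move=> Ss xn; have E : (fun n => tau (phi n) s x) = fun=> 0.
    by apply/funext => n; apply: tz.
  by rewrite /tauS E (cv_lim (cv_cst 0)).
have tSsum s : S0 s -> \sum_(x <- ns) tauS s x = 1.
  move=> Ss.
  have h1 : cv (fun n => \sum_(x <- ns) tau (phi n) s x) (\sum_(x <- ns) tauS s x).
    by apply: cv_sum => x _; apply: cvT.
  have E : (fun n => \sum_(x <- ns) tau (phi n) s x) = fun=> 1.
    apply/funext => n; rewrite -(fsumT_seq nsU); first by case: (Hlmc (phi n) s) => _ [].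
    by move=> x; apply: tz.
  rewrite E in h1; exact: (cv_uniq h1 (cv_cst 1)).
have tSd s : S0 s -> is_distr (tauS s).
  move=> Ss; split; first by move=> x; apply: tS0.
  split.
    apply: (@sub_finite_set _ _ [set` ns]); last exact: finite_seq.
    move=> x /= hx; apply/negPn/negP => xn; move/eqP: hx; apply; exact: tSz.
  by rewrite (fsumT_seq nsU) ?tSsum // => x; apply: tSz.
have massmu s j : S0 s -> prob_of (tauS s) (P j) = mu j.
  by move=> Ss; have [u Nu E] := hP j; rewrite /mu E; apply: mass.
exists tauS, k, P, mu.
split; first exact: tSd.
split; first by move=> j; have [u Nu ->] := hP j; exists u; apply: cls_mem.
split.
  move=> j j' jj'; apply/seteqP; split => // x [h1 h2].
  by have E := Pdisj j j' x h1 h2; rewrite E eqxx in jj'.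
split.
  apply/seteqP; split => [x [j _ Pjx]|x Nx].
    by have [u Nu E] := hP j; rewrite E in Pjx; case: Pjx.
  by have [j hj] := Pcov x Nx; exists j.
split.
  split; first by move=> j; apply: fsumr_ge0 => x _; apply: tS0.
  split; first exact: finite_finset.
  rewrite (fsumT_seq (enum_uniq 'I_k)); last by move=> j; rewrite mem_enum.
  have E j : mu j = \sum_(x <- ns) (if x \in P j then tauS s0 x else 0).
    exact: prob_seq _ nsU (PN j).
  under eq_bigr do rewrite E.
  rewrite exchange_big /= -(tSsum s0 Ss0) big_seq [RHS]big_seq.
  apply: eq_bigr => x xn.
  have [j0 hj0] := Pcov x (iffLR (nsP x) xn).
  rewrite (bigD1_seq j0) ?mem_enum ?enum_uniq //= (mem_set hj0) big1 ?addr0 // => j hj.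
  case: ifP => // /set_mem hx.
  by have E' := Pdisj _ _ _ hx hj0; rewrite E' eqxx in hj.
split; first by move=> s j Ss; apply: massmu.
pose A i := bigmax_set S0 (fun s => l1dist (tau i s) (tauS s)).
pose B i := bigmax_set (S0 `*` [set: 'I_k])
  (fun p => `|prob_of (tau i p.1) (P p.2) - mu p.2|).
pose Cm i := bigmax_set [set p : S * S | exists j, P j p.1 /\ P j p.2]
  (fun p => d i p.1 p.2).
pose E1 n := \sum_(s <- s0s) \sum_(x <- ns) `|tau (phi n) s x - tauS s x|.
pose E2 n := \sum_(s <- s0s) \sum_(j <- enum 'I_k) `|prob_of (tau (phi n) s) (P j) - mu j|.
pose E3 n := \sum_(u <- ns) \sum_(v <- ns) (if dl u v == 0 then d (phi n) u v else 0).
have E10 n : 0 <= E1 n by apply: sumr_ge0 => s _; apply: sumr_ge0.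
have E20 n : 0 <= E2 n by apply: sumr_ge0 => s _; apply: sumr_ge0.
have E30 n : 0 <= E3 n.
  by apply: sumr_ge0 => u _; apply: sumr_ge0 => v _; case: ifP.
have AE n : A (phi n) <= E1 n.
  apply: bigmax_set_le => // s Ss.
  have -> : l1dist (tau (phi n) s) (tauS s) =
      \sum_(x <- ns) `|tau (phi n) s x - tauS s x|.
    rewrite /l1dist (fsumT_seq nsU) // => x xn.
    by rewrite tz // tSz // subrr normr0.
  apply: (elt_le_sum (f := fun s => \sum_(x <- ns) `|tau (phi n) s x - tauS s x|)) => //.
    by move=> y; apply: sumr_ge0.
  by apply/s0P.
have BE n : B (phi n) <= E2 n.
  apply: bigmax_set_le => // [[s j]] [/= Ss _].
  have hs : s \in s0s by apply/s0P.
  have h1 : `|prob_of (tau (phi n) s) (P j) - mu j| <=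
      \sum_(j <- enum 'I_k) `|prob_of (tau (phi n) s) (P j) - mu j|.
    apply: (elt_le_sum (f := fun j => `|prob_of (tau (phi n) s) (P j) - mu j|)).
    - exact: enum_uniq.
    - by [].
    - by rewrite mem_enum.
  apply: le_trans h1 _.
  apply: (elt_le_sum (f := fun s => \sum_(j <- enum 'I_k)
      `|prob_of (tau (phi n) s) (P j) - mu j|) s0U _ hs).
  by move=> y; apply: sumr_ge0.
have CE n : Cm (phi n) <= E3 n.
  apply: bigmax_set_le => // [[a1 b1]] [j [/= h1 h2]].
  have [u Nu Ej] := hP j; rewrite Ej in h1 h2.
  case: h1 => Na ha; case: h2 => Nb1 hb.
  have hab : dl a1 b1 = 0.
    apply/eqP; rewrite eq_le dl0 //= andbT.
    by apply: le_trans (dltri a1 u b1 Na Nu Nb1) _; rewrite dlsym ha hb addr0.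
  have ha1 : a1 \in ns by apply/nsP.
  have hb1 : b1 \in ns by apply/nsP.
  apply: le_trans (elt_le_sum (f := fun u => \sum_(v <- ns)
      (if dl u v == 0 then d (phi n) u v else 0)) nsU _ ha1).
    have := elt_le_sum (f := fun v => if dl a1 v == 0 then d (phi n) a1 v else 0) nsU _ hb1.
    rewrite /= hab eqxx; apply.
    by move=> y; case: ifP.
  by move=> y; apply: sumr_ge0 => v _; case: ifP.
have cvE1 : cv E1 0.
  have : cv E1 (\sum_(s <- s0s) \sum_(x <- ns) 0).
    apply: cv_sum_seq => s /s0P Ss; apply: cv_sum => x _.
    have := cv_abs (cv_add (cvT s x Ss) (cv_opp (cv_cst (tauS s x)))).
    by rewrite subrr normr0.
  by rewrite big1 // => s _; rewrite big1.
have cvE2 : cv E2 0.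
  have : cv E2 (\sum_(s <- s0s) \sum_(j <- enum 'I_k) 0).
    apply: cv_sum_seq => s /s0P Ss; apply: cv_sum => j _.
    have hP1 : cv (fun n => prob_of (tau (phi n) s) (P j)) (mu j).
      have EE : (fun n => prob_of (tau (phi n) s) (P j)) =
          fun n => \sum_(x <- ns) (if x \in P j then tau (phi n) s x else 0).
        by apply/funext => n; apply: prob_seq.
      rewrite EE -(massmu s j Ss) (prob_seq _ nsU (PN j)).
      apply: cv_sum => x _.
      by case: ifP => _; [exact: cvT|exact: cv_cst].
    have := cv_abs (cv_add hP1 (cv_opp (cv_cst (mu j)))).
    by rewrite subrr normr0.
  by rewrite big1 // => s _; rewrite big1.
have cvE3 : cv E3 0.
  have : cv E3 (\sum_(u <- ns) \sum_(v <- ns) 0).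
    apply: cv_sum_seq => u /nsP Nu; apply: cv_sum_seq => v /nsP Nv.
    case hz : (dl u v == 0); last exact: (cv_cst 0).
    by move/eqP: hz => hz; rewrite -hz; apply: cvD.
  by rewrite big1 // => u _; rewrite big1.
have cvEt : cv (fun n => E1 n + E2 n + E3 n) 0.
  by rewrite -(addr0 0) -[in X in cv _ (X + _)](addr0 0); apply: cv_add; [apply: cv_add|].
apply: liminf0_in.
  by move=> i; rewrite le_max bigmax_set_ge0.
move=> e e0 M.
have /cvE HM0 := cvEt.
have [M0 HM1] := HM0 e e0.
pose n := maxn M M0.
have hn := HM1 n (leq_maxr _ _).
exists (phi n).
  by apply: leq_trans (leq_maxl M M0) (incr_ge phi_incr n).
have hle : Num.max (A (phi n)) (Num.max (B (phi n)) (Cm (phi n))) <= E1 n + E2 n + E3 n.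
  rewrite !ge_max; apply/andP; split; last (apply/andP; split).
  - by have := AE n; have := E20 n; have := E30 n; lra.
  - by have := BE n; have := E10 n; have := E30 n; lra.
  - by have := CE n; have := E10 n; have := E20 n; lra.
apply: le_lt_trans hle _.
move: hn; rewrite subr0 => hn; apply: le_lt_trans (ler_norm _) hn.
Qed.
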